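(* Let $G$ be an $n\times n$ grid with $n$ even. Any initial configuration of $k\ge 3$ robots on distinct nodes of $G$ in which exactly one corner of the minimum enclosing square is occupied is gatherable despite at most one crash fault.
   Context: Model. The grid is the anonymous grid graph. A configuration is a map $f:V(G)\to\{0,1,2\}$ ($0$ empty, $1$ singleton, $2$ multiplicity = at least two robots). Robots are anonymous, identical, oblivious, cannot communicate, share no coordinate system, orientation or chirality, and run the same deterministic algorithm, in Look–Compute–Move cycles: snapshot of the whole configuration (global visibility, weak multiplicity detection), deterministic decision to stay or move to an adjacent node, instantaneous move. Fully asynchronous (finite but unbounded adversarial delays; every non-crashed robot activated infinitely often; moves may use outdated snapshots). At most one robot may crash at an adversarial time: it stops forever, stays visible, indistinguishable. Gatherable despite at most one crash fault: some such algorithm guarantees in every execution with at most one crash that after finite time all non-crashed robots are on one node and remain there. Minimum enclosing square (MES): the smallest square subgrid with the same geometric center as the grid containing all occupied nodes; its corners are its four corner nodes. *)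

(* Defs.v *)
From mathcomp Require Import all_boot.
Set Implicit Arguments. Unset Strict Implicit. Unset Printing Implicit Defensive.

Section Grid.
Variable n : nat.

Definition node := ('I_n * 'I_n)%type.

Definition adj (u v : node) : bool :=
  ((u.1 : nat) == v.1) && (((u.2 : nat) == v.2.+1) || ((v.2 : nat) == u.2.+1))
  || ((u.2 : nat) == v.2) && (((u.1 : nat) == v.1.+1) || ((v.1 : nat) == u.1.+1)).

(** A configuration: 0 empty, 1 singleton, 2 multiplicity (>= 2 robots). *)
Definition config := node -> nat.

(** The 8 automorphisms of the grid (no common orientation nor chirality):
    code (s, fx, fy) = optional swap of the axes, then optional reflection
    of each axis. *)
Definition symcode := (bool * bool * bool)%type.
Definition flip (b : bool) (a : 'I_n) : 'I_n := if b then rev_ord a else a.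
Definition symf (c : symcode) (v : node) : node :=
  let: (s, fx, fy) := c in
  let: (a, b) := if s then (v.2, v.1) else (v.1, v.2) in (flip fx a, flip fy b).
Definition sym_inv (c : symcode) : symcode :=
  let: (s, fx, fy) := c in if s then (s, fy, fx) else (s, fx, fy).

Lemma symf_invK c : cancel (symf c) (symf (sym_inv c)).
Proof.
case: c => [[s fx] fy] [a b].
by case: s; case: fx; case: fy; rewrite /= ?rev_ordK.
Qed.

(** An algorithm: deterministic function of the snapshot (expressed in the
    robot's local frame) and of the robot's own (local) position, returning
    the node it wants to move to (in local coordinates). A returned node
    which is neither the current node nor adjacent to it means "stay". *)
Definition algorithm := config -> node -> node.

(** Minimum enclosing square: for even n, the squares of the grid concentric
    with the grid are [d, n-1-d]^2. *)
Definition in_square (d : nat) (v : node) : bool :=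
  [&& d <= v.1, (v.1 : nat) <= n.-1 - d, d <= v.2 & (v.2 : nat) <= n.-1 - d].
Definition encloses (occ : pred node) (d : nat) : Prop :=
  forall v, occ v -> in_square d v.
Definition is_MES (occ : pred node) (d : nat) : Prop :=
  encloses occ d /\ forall d', encloses occ d' -> d' <= d.
Definition is_corner (d : nat) (v : node) : bool :=
  (((v.1 : nat) == d) || ((v.1 : nat) == n.-1 - d)) &&
  (((v.2 : nat) == d) || ((v.2 : nat) == n.-1 - d)).

Section Robots.
Variable k : nat.
Definition robot := 'I_k.

(** Configuration induced by robot positions (weak multiplicity detection). *)
Definition cfg_of (pos : robot -> node) : config :=
  fun v => minn #|[pred i | pos i == v]| 2.

Record state := State {
  pos : robot -> node;
  pend : robot -> option node;   (* move computed at the last Look, not yet executed *)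
  crashed : option robot
}.

Definition alive (st : state) (i : robot) : bool := crashed st != Some i.

(** Adversarial events: a Look (snapshot + compute, with an adversarially
    chosen local frame), a Move (instantaneous move to the node computed at
    the last Look, possibly from an outdated snapshot), or a Crash. *)
Inductive event :=
| Look of robot & symcode
| Move of robot
| Crash of robot.

Definition upd {T : Type} (f : robot -> T) (i : robot) (x : T) : robot -> T :=
  fun j => if j == i then x else f j.

(** Target computed by robot at p: local->global frame map is symf c. *)
Definition target (A : algorithm) (C : config) (p : node) (c : symcode) : node :=
  let t := symf c (A (fun u => C (symf c u)) (symf (sym_inv c) p)) in
  if (t == p) || adj p t then t else p.

Definition step (A : algorithm) (st : state) (e : event) : state :=
  match e with
  | Look i c =>
      if alive st i && (pend st i == None) then
        State (pos st)
              (upd (pend st) i (Some (target A (cfg_of (pos st)) (pos st i) c)))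
              (crashed st)
      else st
  | Move i =>
      if alive st i then
        match pend st i with
        | Some t => State (upd (pos st) i t) (upd (pend st) i None) (crashed st)
        | None => st
        end
      else st
  | Crash i =>
      if crashed st == None then State (pos st) (pend st) (Some i) else st
  end.

Fixpoint run (A : algorithm) (pos0 : robot -> node) (sched : nat -> event)
    (t : nat) : state :=
  match t with
  | 0 => State pos0 (fun _ => None) None
  | t'.+1 => step A (run A pos0 sched t') (sched t')
  end.

Definition fair (A : algorithm) (pos0 : robot -> node) (sched : nat -> event)
    : Prop :=
  forall i, (forall t, alive (run A pos0 sched t) i) ->
  forall N, exists m, N <= m /\ sched m = Move i /\
                      pend (run A pos0 sched m) i <> None.

Definition gathers (A : algorithm) (pos0 : robot -> node) (sched : nat -> event)
    : Prop :=
  exists T (v : node), forall t, T <= t -> forall i,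
    alive (run A pos0 sched t) i -> pos (run A pos0 sched t) i = v.

(** Gatherable despite at most one crash fault (the schedule may contain
    at most one effective Crash, by construction of [step]). *)
Definition gatherable_1crash (pos0 : robot -> node) : Prop :=
  exists A : algorithm, forall sched, fair A pos0 sched -> gathers A pos0 sched.

Definition occupied (pos0 : robot -> node) : pred node :=
  fun v => [exists i, pos0 i == v].

End Robots.
End Grid.

(* Main.v *)
Require Import Defs.
From mathcomp Require Import all_boot zify.
From Stdlib Require Import Classical.
Set Implicit Arguments. Unset Strict Implicit. Unset Printing Implicit Defensive.

Lemma sq_sym n (s : symcode) d (v : node n) : in_square d (symf s v) = in_square d v.
Proof.
case: s => [[sw fx] fy]; case: v => a b.
case: sw; case: fx; case: fy; rewrite /in_square /symf /flip /=;
 move: (ltn_ord a) (ltn_ord b); lia.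
Qed.
Lemma co_sym n (s : symcode) d (v : node n) : d < n -> is_corner d (symf s v) = is_corner d v.
Proof.
case: s => [[sw fx] fy]; case: v => a b.
case: sw; case: fx; case: fy; rewrite /is_corner /symf /flip /=; move=> ?;
 move: (ltn_ord a) (ltn_ord b); lia.
Qed.
Lemma adj_sym n (s : symcode) (u v : node n) : adj (symf s u) (symf s v) = adj u v.
Proof.
case: s => [[sw fx] fy]; case: v => a b; case: u => a' b'.
case: sw; case: fx; case: fy; rewrite /adj /symf /flip /=;
 move: (ltn_ord a) (ltn_ord b) (ltn_ord a') (ltn_ord b'); lia.
Qed.

Definition dst n (u v : node n) : nat :=
  ((u.1:nat) - v.1) + (v.1 - u.1) + ((u.2:nat) - v.2) + (v.2 - u.2).

Lemma dst_sym n (s : symcode) (u v : node n) : dst (symf s u) (symf s v) = dst u v.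
Proof.
case: s => [[sw fx] fy]; case: v => a b; case: u => a' b'.
case: sw; case: fx; case: fy; rewrite /dst /symf /flip /=;
 move: (ltn_ord a) (ltn_ord b) (ltn_ord a') (ltn_ord b'); lia.
Qed.

Lemma node_eqE n (u v : node n) : (u == v) = ((u.1 : nat) == v.1) && ((u.2 : nat) == v.2).
Proof. by case: u v => a b [a' b']. Qed.

Lemma dst0 n (u v : node n) : dst u v = 0 -> u = v.
Proof.
move=> H; apply/eqP; rewrite node_eqE; move: H; rewrite /dst; lia.
Qed.

Lemma sym_invK (s : symcode) : sym_inv (sym_inv s) = s.
Proof. by case: s => [[[] ?] ?]. Qed.

Definition tw n (a c : 'I_n) : 'I_n := insubd a (if a < c then a.+1 else a.-1).

Lemma tw_val n (a c : 'I_n) : (tw a c : nat) = if a < c then a.+1 else a.-1.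
Proof.
rewrite /tw val_insubd; move: (ltn_ord a) (ltn_ord c) => ha hc.
case H: (a < c); rewrite ifT //; lia.
Qed.

Definition okp n (C : config n) (x : 'I_n * node n) : bool :=
  [forall v, (C v != 0) ==> in_square x.1 v] && is_corner x.1 x.2 && (C x.2 != 0).

Definition alg n : algorithm n := fun C p =>
  match [pick x : 'I_n * node n | okp C x] with
  | Some x =>
    let d := val x.1 in let c := x.2 in
    if p == c then p else
    let p1 := (tw p.1 c.1, p.2) in let p2 := (p.1, tw p.2 c.2) in
    if ((p.1 : nat) != c.1) && (~~ is_corner d p1 || (p1 == c)) then p1 else p2
  | None => p
  end.

Definition good n (C : config n) d (c : node n) : Prop :=
  [/\ forall v, C v != 0 -> in_square d v, is_corner d c, C c != 0 &
      forall v, C v != 0 -> is_corner d v -> v = c].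

Lemma good_lt n (C : config n) d c : good C d c -> d < n.
Proof.
case=> H1 _ H3 _; move: (H1 _ H3); rewrite /in_square; move: (ltn_ord c.1); lia.
Qed.

Lemma okp_good n (C : config n) d c x : good C d c -> okp C x -> (val x.1 = d) /\ x.2 = c.
Proof.
move=> G; have dn := good_lt G; case: G => H1 H2 H3 H4.
case: x => [x1 [a b]] /andP [/andP [/forallP F Hc] Ho] /=.
have := F c; rewrite H3 /= => Hic.
have := H1 _ Ho => Hs.
move: Hic Hs Hc H2; rewrite /in_square /is_corner /=.
move: (ltn_ord x1) (ltn_ord c.1) (ltn_ord c.2) (ltn_ord a) (ltn_ord b) => *.
have E : (x1 : nat) = d by lia.
split=> //; apply: H4 => //; rewrite /is_corner /= -E //.
Qed.

Definition PendOK n d (c p t : node n) : Prop :=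
  [/\ p = c -> t = c, p != c -> adj p t && (dst t c < dst p c), in_square d t &
      (is_corner d t -> t = c)].

Lemma alg_spec n (C : config n) d c p : good C d c -> C p != 0 -> PendOK d c p (alg C p).
Proof.
move=> G Hp; have dn := good_lt G.
rewrite /alg; case: pickP => [x Hx|H]; last first.
  have := H (Ordinal dn, c); rewrite /okp /=.
  case: G => H1 H2 H3 H4; rewrite H2 H3 !andbT.
  by have -> : [forall v, (C v != 0) ==> in_square d v] by apply/forallP => v; apply/implyP/H1.
have [E1 E2] := okp_good G Hx.
case: x E1 E2 Hx => x1 c' /= E1 -> _; rewrite E1.
case: G => H1 H2 H3 H4.
have Hps := H1 _ Hp.
case: eqP => [->|Hne]; first by split => //; [rewrite eqxx|apply: H1].
have Hnc : ~~ is_corner d p by apply/negP => /(H4 _ Hp) /Hne.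
move: Hps Hnc H2 Hne (H1 _ H3).
case: p Hp => a b Hp; case: c H3 H4 => ca cb H3 H4 /=.
move=> Hps Hnc H2 /eqP Hne Hcs.
move: Hne; rewrite node_eqE /= => Hne.
move: (ltn_ord a) (ltn_ord b) (ltn_ord ca) (ltn_ord cb) => la lb lca lcb.
have ta : (a < ca -> (tw a ca:nat) = a.+1) /\ (~~(a<ca) -> (tw a ca : nat) = a.-1).
  by rewrite tw_val; split => [->|/negbTE ->].
have tb : (b < cb -> (tw b cb:nat) = b.+1) /\ (~~(b<cb) -> (tw b cb : nat) = b.-1).
  by rewrite tw_val; split => [->|/negbTE ->].
move: Hps Hnc H2 Hcs; rewrite /adj /dst /in_square /is_corner /= => Hps Hnc H2 Hcs.
rewrite /PendOK /adj /dst /in_square /is_corner !node_eqE /=.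
case: ifP => Hif; move: Hif; rewrite /is_corner ?node_eqE /= => Hif.
- have Hac : (a:nat) != ca by case/andP: Hif.
  have Hif2 := Hif; move/andP: Hif2 => [_ Hif2].
  case: ta => ta1 ta2.
  split.
  + by case=> Ea Eb; move: Hne; rewrite Ea Eb !eqxx.
  + move=> _; clear -ta1 ta2 Hac; lia.
  + clear -ta1 ta2 Hac Hps Hcs; lia.
  + move=> Hc; apply/eqP; rewrite node_eqE /=; clear -Hif2 Hc; lia.
- case: ta => ta1 ta2; case: tb => tb1 tb2.
  case/andP: H2 => /orP[/eqP Ec1|/eqP Ec1] /orP[/eqP Ec2|/eqP Ec2];
  (case: (ltnP a ca) => Hl; [move: (ta1 Hl) | have := ta2 _; rewrite -leqNgt; move/(_ Hl)]) => Ta;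
  rewrite Ta in Hif *; clear ta1 ta2.
  all: have Hbc : (b:nat) != cb by clear -Hif Hne Hnc Hps Hcs Ec1 Ec2 Hl; lia.
  all: split.
  all: try by case=> Ea Eb; move: Hne; rewrite Ea Eb !eqxx.
  all: try by move=> _; clear -tb1 tb2 Hbc; lia.
  all: try by clear -tb1 tb2 Hbc Hps Hcs; lia.
  all: move=> Hc; apply/eqP; rewrite node_eqE /=.
  all: (case: (ltnP b cb) => Hl2; [move: (tb1 Hl2) | have := tb2 _; rewrite -leqNgt; move/(_ Hl2)]) => Tb;
  rewrite Tb in Hc *.
  all: clear -Hif Hne Hnc Ec1 Ec2 Hl Hl2 Hps Hcs Hbc Hc; lia.
Qed.

Lemma target_spec n (C : config n) d c p s :
  good C d c -> C p != 0 -> PendOK d c p (target (@alg n) C p s).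
Proof.
move=> G Hp; have dn := good_lt G.
pose sg := @symf n s; pose tau := @symf n (sym_inv s).
have K1 : cancel sg tau := symf_invK s.
have K2 : cancel tau sg by move=> x; rewrite /sg /tau -{1}(sym_invK s) symf_invK.
have G' : good (fun u => C (sg u)) d (tau c).
  case: G => H1 H2 H3 H4; split.
  - by move=> v /H1; rewrite sq_sym.
  - by rewrite co_sym.
  - by rewrite K2.
  - by move=> v /H4 H /=; rewrite -(co_sym s v dn) => /H <-; rewrite K1.
have Hp' : C (sg (tau p)) != 0 by rewrite K2.
have [S1 S2 S3 S4] := alg_spec G' Hp'.
rewrite /target -/sg -/tau.
set t' := alg _ _ in S1 S2 S3 S4 *.
have E : ((sg t' == p) || adj p (sg t')) = true.
  case: (eqVneq p c) => [Epc|Hne].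
  - by rewrite S1 ?Epc ?K2 ?eqxx.
  - have Hne' : tau p != tau c by apply: contra Hne => /eqP /(can_inj K2) ->.
    case/andP: (S2 Hne') => Ha _; apply/orP; right.
    by rewrite -{1}(K2 p) adj_sym.
rewrite E; split.
- by move=> Epc; rewrite S1 ?Epc ?K2.
- move=> Hne; have Hne' : tau p != tau c by apply: contra Hne => /eqP /(can_inj K2) ->.
  case/andP: (S2 Hne') => Ha Hd.
  by rewrite -{1}(K2 p) adj_sym Ha -{1}(K2 c) dst_sym -(K2 p) -(K2 c) dst_sym !K1.
- by rewrite sq_sym.
- by rewrite co_sym // => /S4 ->; rewrite K2.
Qed.

Definition Inv n k d (c : node n) (st : state n k) : Prop :=
  [/\ forall i, in_square d (pos st i), forall i, is_corner d (pos st i) -> pos st i = c,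
      exists i, pos st i = c & forall i t, pend st i = Some t -> PendOK d c (pos st i) t].

Lemma cfg_occ n k (p : 'I_k -> node n) v : (cfg_of p v != 0) = [exists i, p i == v].
Proof.
rewrite /cfg_of; apply/idP/existsP.
- set X := #|_|; case Em: X => [|m] //.
  move=> _; have : 0 < X by rewrite Em.
  by case/card_gt0P => i; rewrite inE => Hi; exists i.
- set X := #|_|; case=> i Hi; have : 0 < X by apply/card_gt0P; exists i; rewrite inE.
  clearbody X; by case: X => [|[|m]].
Qed.

Lemma Inv_good n k d c (st : state n k) : is_corner d c -> Inv d c st -> good (cfg_of (pos st)) d c.
Proof.
move=> Hc [H1 H2 [j Hj] H4]; split => //.
- by move=> v; rewrite cfg_occ => /existsP [i /eqP <-].
- by rewrite cfg_occ; apply/existsP; exists j; rewrite Hj.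
- by move=> v; rewrite cfg_occ => /existsP [i /eqP <-] /H2.
Qed.

Lemma step_inv n k d c (st : state n k) e :
  is_corner d c -> Inv d c st -> Inv d c (step (@alg n) st e).
Proof.
move=> Hc I; have G := Inv_good Hc I; case: (I) => H1 H2 [j Hj] H4.
case: e => [i s|i|i] /=.
- case: ifP => _; last exact: I; split; [exact: H1 | exact: H2 | by exists j | ] => /=.
  move=> i' t; rewrite /upd; case: eqP => [-> [<-]|_]; last exact: H4.
  apply: target_spec G _; rewrite cfg_occ; apply/existsP; exists i; exact: eqxx.
- case: ifP => _; last exact: I; case E: (pend st i) => [t|]; last exact: I.
  have [P1 P2 P3 P4] := H4 _ _ E.
  split => /=.
  + by move=> i'; rewrite /upd; case: eqP.
  + by move=> i'; rewrite /upd; case: eqP => _; [apply: P4|apply: H2].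
  + case: (eqVneq j i) => [Eji|Nji].
    * exists i; rewrite /upd eqxx; apply: P1; by rewrite -Eji.
    * by exists j; rewrite /upd (negbTE Nji).
  + move=> i' t'; rewrite /upd; case: eqP => // _; exact: H4.
- by case: ifP => _; last exact: I; split => //; exists j.
Qed.

Lemma run_inv n k d c (pos0 : 'I_k -> node n) sched t :
  is_corner d c -> Inv d c (State pos0 (fun _ => None) None) ->
  Inv d c (run (@alg n) pos0 sched t).
Proof. move=> Hc I0; elim: t => //= t IH; exact: step_inv. Qed.

Lemma crash_perm n k (pos0 : 'I_k -> node n) sched t i :
  ~~ alive (run (@alg n) pos0 sched t) i -> ~~ alive (run (@alg n) pos0 sched t.+1) i.
Proof.
rewrite /alive !negbK /= => /eqP E.
case: (sched t) => [j s|j|j] /=.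
- by case: ifP => _ /=; rewrite ?E.
- by case: ifP => _ /=; [case: (pend _ j) => [?|] /=|]; rewrite ?E.
- by case: ifP => /= H; rewrite ?E //; move: H; rewrite E.
Qed.

Lemma crash_permN n k (pos0 : 'I_k -> node n) sched t t' i : t <= t' ->
  ~~ alive (run (@alg n) pos0 sched t) i -> ~~ alive (run (@alg n) pos0 sched t') i.
Proof.
move=> /subnK <-; elim: (t' - t) => // m IH H; rewrite addSn; exact/crash_perm/IH.
Qed.

Lemma pos_step n k d c (st : state n k) e i :
  is_corner d c -> Inv d c st ->
  pos (step (@alg n) st e) i = pos st i \/ PendOK d c (pos st i) (pos (step (@alg n) st e) i).
Proof.
move=> Hc [_ _ _ H4]; case: e => [j s|j|j] /=.
- by case: ifP; left.
- case: ifP => _; last by left.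
  case E: (pend st j) => [t|]; last by left.
  rewrite /= /upd; case: eqP => [Eij|]; last by left.
  by right; subst; apply: H4.
- by case: ifP; left.
Qed.

Lemma dst_step n k d c (pos0 : 'I_k -> node n) sched t i :
  is_corner d c -> Inv d c (State pos0 (fun _ => None) None) ->
  dst (pos (run (@alg n) pos0 sched t.+1) i) c <= dst (pos (run (@alg n) pos0 sched t) i) c /\
  (pos (run (@alg n) pos0 sched t) i = c -> pos (run (@alg n) pos0 sched t.+1) i = c).
Proof.
move=> Hc I0.
have [E|[P1 P2 _ _]] := pos_step (sched t) i Hc (run_inv sched t Hc I0);
  rewrite /= ?E //.
case: (eqVneq (pos (run (@alg n) pos0 sched t) i) c) => [Ec|Hne].
  by rewrite P1 // Ec.
case/andP: (P2 Hne) => _ Hd; split; first exact: ltnW.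
by move=> Ec; rewrite Ec eqxx in Hne.
Qed.

Lemma dst_mono n k d c (pos0 : 'I_k -> node n) sched t t' i :
  is_corner d c -> Inv d c (State pos0 (fun _ => None) None) -> t <= t' ->
  dst (pos (run (@alg n) pos0 sched t') i) c <= dst (pos (run (@alg n) pos0 sched t) i) c /\
  (pos (run (@alg n) pos0 sched t) i = c -> pos (run (@alg n) pos0 sched t') i = c).
Proof.
move=> Hc I0 /subnK <-; elim: (t' - t) => [|m [IH1 IH2]] //.
have [D1 D2] := dst_step sched (m + t) i Hc I0.
rewrite addSn; split; first exact: leq_trans D1 IH1.
by move=> /IH2 /D2.
Qed.

Lemma dst_strict n k d c (pos0 : 'I_k -> node n) sched t i :
  is_corner d c -> Inv d c (State pos0 (fun _ => None) None) ->
  sched t = Move i -> alive (run (@alg n) pos0 sched t) i ->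
  pend (run (@alg n) pos0 sched t) i <> None ->
  pos (run (@alg n) pos0 sched t) i != c ->
  dst (pos (run (@alg n) pos0 sched t.+1) i) c < dst (pos (run (@alg n) pos0 sched t) i) c.
Proof.
move=> Hc I0 Es Ha Hp Hne.
have [_ _ _ H4] := run_inv sched t Hc I0.
rewrite /= Es /= Ha.
case E: (pend _ i) Hp => [t'|] // _.
have [_ P2 _ _] := H4 _ _ E.
by case/andP: (P2 Hne) => _; rewrite /= /upd eqxx.
Qed.

Lemma conv n k d c (pos0 : 'I_k -> node n) sched i :
  is_corner d c -> Inv d c (State pos0 (fun _ => None) None) ->
  fair (@alg n) pos0 sched -> (forall t, alive (run (@alg n) pos0 sched t) i) ->
  forall m N, dst (pos (run (@alg n) pos0 sched N) i) c <= m ->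
  exists T, pos (run (@alg n) pos0 sched T) i = c.
Proof.
move=> Hc I0 Hf Ha; elim=> [|m IH] N HN.
  by exists N; apply: dst0; move: HN; rewrite leqn0 => /eqP.
have [m0 [HN0 [Es Hp]]] := Hf i Ha N.
case: (eqVneq (pos (run (@alg n) pos0 sched m0) i) c) => [Ec|Hne]; first by exists m0.
apply: (IH m0.+1).
have S := dst_strict Hc I0 Es (Ha m0) Hp Hne.
have [M _] := dst_mono sched i Hc I0 HN0.
rewrite -ltnS; apply: leq_trans S _; exact: leq_trans M HN.
Qed.

Lemma gathers_of n k d c (pos0 : 'I_k -> node n) sched :
  is_corner d c -> Inv d c (State pos0 (fun _ => None) None) ->
  fair (@alg n) pos0 sched -> gathers (@alg n) pos0 sched.
Proof.
move=> Hc I0 Hf.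
pose Q i t := alive (run (@alg n) pos0 sched t) i -> pos (run (@alg n) pos0 sched t) i = c.
have Hi : forall i, exists T, forall t, T <= t -> Q i t.
  move=> i; case: (classic (forall t, alive (run (@alg n) pos0 sched t) i)) => [Ha|Hna].
  - have [T HT] := @conv n k d c pos0 sched i Hc I0 Hf Ha _ 0 (leqnn _).
    exists T => t Ht _; exact: (proj2 (dst_mono sched i Hc I0 Ht)).
  - have [t0 Ht0] := not_all_ex_not _ _ Hna.
    have Ht0' : ~~ alive (run (@alg n) pos0 sched t0) i by apply/negP.
    exists t0 => t Ht Ha; exfalso; move: (crash_permN Ht Ht0'); by rewrite Ha.
have Hs : forall s : seq 'I_k, exists T, forall i, i \in s -> forall t, T <= t -> Q i t.
  elim=> [|a s [T IH]]; first by exists 0.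
  have [Ta HTa] := Hi a.
  exists (maxn Ta T) => i; rewrite inE => /orP [/eqP ->|Hin] t Ht.
  - by apply: HTa; apply: leq_trans Ht; exact: leq_maxl.
  - by apply: IH => //; apply: leq_trans Ht; exact: leq_maxr.
have [T HT] := Hs (enum 'I_k).
exists T, c => t Ht i; apply: HT => //; exact: mem_enum.
Qed.

Theorem theorem4 (n k : nat) (pos0 : 'I_k -> node n) :
  ~~ odd n -> 3 <= k -> injective pos0 ->
  (exists d, is_MES (occupied pos0) d /\
             #|[pred v : node n | is_corner d v && occupied pos0 v]| = 1) ->
  gatherable_1crash pos0.
Proof.
move=> _ _ _ [d [[Enc _] Hcard]].
have [c Hx] := mem_card1 Hcard.
have Hcin : is_corner d c && occupied pos0 c.
  by have := Hx c; rewrite !inE eqxx => ->.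
case/andP: Hcin => Hc Hocc.
have I0 : Inv d c (State pos0 (fun _ => None) None).
  split => /=.
  - by move=> i; apply: Enc; apply/existsP; exists i.
  - move=> i Hi; apply/eqP; have := Hx (pos0 i); rewrite !inE Hi /=.
    by move=> <-; apply/existsP; exists i.
  - by case/existsP: Hocc => i /eqP Hi; exists i.
  - by [].
exists (@alg n) => sched Hf; exact: gathers_of Hc I0 Hf.
Qed.
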